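(* Let $K$ be an infinite field and let $A$ be a standard graded artinian $K$-algebra. Let $\ell, L \in [A]_1$ be general linear elements, and fix positive integers $b$ and $k$. (a) Assume $A$ has the Weak Lefschetz Property and $b \ge k$. If multiplication by $\ell^k$ has maximal rank in each degree both on $A$ and on $A/L^bA$, then multiplication by $L^b$ has maximal rank in each degree on $A/\ell^k A$. (b) If multiplication by $\ell^k$ has maximal rank in each degree on $A/L^bA$ and multiplication by $L^b$ has maximal rank in each degree on $A$, then multiplication by $L^b$ has maximal rank in each degree on $A/\ell^k A$.
   Context: For a graded algebra $B$ and a form $f$ of degree $e$, ''multiplication by $f$ has maximal rank in each degree'' means that for every integer $j$ the $K$-linear map $\times f: [B]_{j-e} \to [B]_j$ is injective or surjective. $A$ has the Weak Lefschetz Property (WLP) if for a general linear form $\ell$ multiplication by $\ell$ has maximal rank in each degree. ''General'' means belonging to a suitable nonempty Zariski open subset of the relevant parameter space. *)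

(* Defs.v *)
From HB Require Import structures.
From mathcomp Require Import all_boot all_order all_algebra.
From mathcomp Require Import mpoly.
Set Implicit Arguments. Unset Strict Implicit. Unset Printing Implicit Defensive.
Import GRing.Theory.
Local Open Scope ring_scope.

Section Defs.
Variables (K : fieldType) (n : nat).
Local Notation R := {mpoly K[n]}.

Definition infinite_field := forall s : seq K, exists x : K, x \notin s.

Definition hcomp (d : nat) (p : R) : R :=
  \sum_(m <- msupp p | mdeg m == d) p@_m *: 'X_[m].

Definition is_ideal (I : R -> Prop) : Prop :=
  [/\ I 0, (forall p q, I p -> I q -> I (p + q)) & (forall p q, I q -> I (p * q))].

Definition homog_ideal (I : R -> Prop) : Prop :=
  is_ideal I /\ forall p d, I p -> I (hcomp d p).

(* A = R/I is artinian: [A]_d = 0 for d large *)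
Definition artinian (I : R -> Prop) : Prop :=
  exists D : nat, forall d (p : R), (D <= d)%N -> p \is d.-homog -> I p.

Definition ideal_add (I : R -> Prop) (f : R) : R -> Prop :=
  fun p => exists i q, I i /\ p = i + q * f.

(* multiplication by f (homogeneous of degree e) on B = R/J, from [B]_i to
   [B]_(i+e), is injective, resp. surjective *)
Definition mult_inj (J : R -> Prop) (f : R) (i : nat) : Prop :=
  forall g : R, g \is i.-homog -> J (f * g) -> J g.
Definition mult_surj (J : R -> Prop) (f : R) (e i : nat) : Prop :=
  forall h : R, h \is (i + e)%N.-homog -> exists g : R, g \is i.-homog /\ J (h - f * g).

(* multiplication by f of degree e has maximal rank in each degree on R/J.
   (Degrees j < e are trivial since the source [B]_(j-e) is 0.) *)
Definition max_rank (J : R -> Prop) (f : R) (e : nat) : Prop :=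
  forall i : nat, mult_inj J f i \/ mult_surj J f e i.

Definition linform (c : 'I_n -> K) : R := \sum_(i < n) c i *: 'X_i.

(* Weak Lefschetz Property of R/I: for a general linear form (outside the
   zero set of a nonzero polynomial on the coefficient space K^n), multiplication
   has maximal rank in each degree *)
Definition WLP (I : R -> Prop) : Prop :=
  exists P : {mpoly K[n]}, P != 0 /\
    forall c : 'I_n -> K, P.@[c] != 0 -> max_rank I (linform c) 1.

End Defs.

(* Main.v *)
Require Import Defs.
From HB Require Import structures.
From mathcomp Require Import all_boot all_order all_algebra.
From mathcomp Require Import mpoly.
From mathcomp Require Import ring zify.
From Stdlib Require Import Classical IndefiniteDescription.
Set Implicit Arguments. Unset Strict Implicit. Unset Printing Implicit Defensive.
Import GRing.Theory.
Local Open Scope ring_scope.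

Section Basic.
Variables (K : fieldType) (n : nat).
Local Notation R := {mpoly K[n]}.

Lemma hcompE d (p : R) : hcomp d p = pihomog mdeg d p.
Proof. reflexivity. Qed.

Lemma hcomp_homog d (p : R) : p \is d.-homog -> hcomp d p = p.
Proof. by move=> h; rewrite hcompE pihomog_dE. Qed.

Lemma hcompP d (p : R) : hcomp d p \is d.-homog.
Proof. by rewrite hcompE; apply: pihomogP. Qed.

Lemma hcompD d (p q : R) : hcomp d (p + q) = hcomp d p + hcomp d q.
Proof. by rewrite !hcompE pihomogD. Qed.

Lemma hcompX_mul d e (m : 'X_{1..n}) (g : R) : g \is e.-homog ->
  hcomp d ('X_[m] * g) = if mdeg m + e == d then 'X_[m] * g else 0.
Proof.
move=> hg; have hm : 'X_[m] * g \is (mdeg m + e)%N.-homog.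
  by apply: dhomogM => //; rewrite dhomogX.
have [<-|ne] := eqVneq (mdeg m + e)%N d; first by rewrite hcomp_homog.
by rewrite hcompE (pihomog_ne0 _ hm).
Qed.

Lemma hcompM d e (q g : R) : g \is e.-homog ->
  hcomp d (q * g) = if (e <= d)%N then hcomp (d - e) q * g else 0.
Proof.
move=> hg; rewrite {1}[q]mpolyE mulr_suml.
have -> : hcomp d (\sum_(m <- msupp q) (q@_m *: 'X_[m] * g)) =
   \sum_(m <- msupp q) hcomp d (q@_m *: 'X_[m] * g).
  by rewrite hcompE raddf_sum.
under eq_bigr => m _ do rewrite -scalerAl hcompE linearZ /= -hcompE (hcompX_mul _ _ hg).
case: leqP => hed.
  rewrite hcompE pihomogE mulr_suml [RHS]big_mkcond /=; apply: eq_bigr => m _.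
  have -> : (mdeg m + e == d) = (mdeg m == d - e)%N.
    by rewrite -(eqn_add2r e) subnK.
  by case: eqP => _; rewrite ?scaler0 ?mul0r // scalerAl.
rewrite big1 // => m _; case: eqP => [h|_]; last by rewrite scaler0.
by move: hed; rewrite -h ltnNge leq_addl.
Qed.


Section Ideal.
Variable (I : R -> Prop) (HI : homog_ideal I).

Lemma I0 : I 0. Proof. by case: HI => -[]. Qed.
Lemma ID p q : I p -> I q -> I (p + q). Proof. by case: HI => -[_ h _] _; apply: h. Qed.
Lemma IMl p q : I q -> I (p * q). Proof. by case: HI => -[_ _ h] _; apply: h. Qed.
Lemma IMr p q : I p -> I (p * q). Proof. by rewrite mulrC; apply: IMl. Qed.
Lemma IN p : I p -> I (- p). Proof. by move=> h; rewrite -mulN1r; apply: IMl. Qed.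
Lemma IB p q : I p -> I q -> I (p - q). Proof. by move=> hp hq; apply: ID => //; apply: IN. Qed.
Lemma IZ c p : I p -> I (c *: p). Proof. by move=> h; rewrite -mul_mpolyC; apply: IMl. Qed.
Lemma Ihcomp d p : I p -> I (hcomp d p). Proof. by case: HI => _ h; apply: h. Qed.
Lemma Isum (T : Type) (r : seq T) (P : pred T) (F : T -> R) :
  (forall x, P x -> I (F x)) -> I (\sum_(x <- r | P x) F x).
Proof. by move=> h; apply: (big_ind I I0 ID). Qed.

Lemma IA_I f p : I p -> ideal_add I f p.
Proof. by move=> h; exists p, 0; rewrite mul0r addr0. Qed.

Lemma IA_split f e p d : f \is e.-homog -> p \is d.-homog -> ideal_add I f p ->
  exists i q, [/\ I i, q \is (d - e)%N.-homog, ((d < e)%N -> q = 0) & p = i + q * f].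
Proof.
move=> hf hp [i [q [Ii E]]]; subst p.
exists (hcomp d i), (if (e <= d)%N then hcomp (d - e) q else 0); split.
- exact: Ihcomp.
- by case: ifP => _; [apply: hcompP | apply: dhomog0].
- by move=> hde; rewrite leqNgt hde.
- rewrite -{1}(hcomp_homog hp) hcompD (hcompM _ _ hf).
  by case: ifP => _; rewrite ?mul0r.
Qed.

Lemma S1 f g k b i : (k <= i + b)%N -> mult_surj I f k (i + b - k) ->
  mult_surj (ideal_add I f) g b i.
Proof.
move=> hk hs h hh; rewrite -(subnK hk) in hh.
have [y [hy Iy]] := hs h hh; exists 0; split; first exact: dhomog0.
by exists (h - f * y), y; split => //; rewrite mulr0 subr0 mulrC subrK.
Qed.

Lemma S2 f g b i : mult_surj I g b i -> mult_surj (ideal_add I f) g b i.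
Proof. by move=> hs h hh; have [y [hy Iy]] := hs h hh; exists y; split => //; apply: IA_I. Qed.

Lemma S3 f g k b i : f \is k.-homog -> g \is b.-homog -> (k <= i + b)%N ->
  mult_surj (ideal_add I g) f k (i + b - k) -> mult_surj (ideal_add I f) g b i.
Proof.
move=> hf hg hk hs h hh; have hh' := hh; rewrite -(subnK hk) in hh'.
have [y [hy Iy]] := hs h hh'.
have hd : h - f * y \is (i + b)%N.-homog.
  apply: rpredB => //; have -> : (i + b = k + (i + b - k))%N by rewrite subnKC.
  exact: dhomogM.
have [i0 [z [Ii0 hz _ E]]] := IA_split hg hd Iy.
rewrite addnK in hz; exists z; split => //.
exists i0, y; split => //.
by rewrite -[h](subrK (f * y)) E; ring.
Qed.

Lemma core f g k b i : f \is k.-homog -> g \is b.-homog ->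
  mult_inj I g i ->
  ((k <= i + b)%N -> mult_inj (ideal_add I g) f (i + b - k)) ->
  mult_inj (ideal_add I f) g i.
Proof.
move=> hf hg injg injf x hx Igx.
have hgx : g * x \is (i + b)%N.-homog by rewrite addnC; apply: dhomogM.
have [i1 [y [Ii1 hy y0 E1]]] := IA_split hf hgx Igx.
case: (leqP k (i + b)) => hk; last first.
  rewrite y0 // mul0r addr0 in E1.
  by apply: IA_I; apply: injg => //; rewrite E1.
have Iy : ideal_add I g y.
  apply: (injf hk y hy).
  by exists (- i1), x; split; [apply: IN | rewrite mulrC (mulrC x) E1; ring].
have [i3 [z [Ii3 hz z0 E3]]] := IA_split hg hy Iy.
have hu : x - f * z \is i.-homog.
  apply: rpredB => //; case: (leqP k i) => hki.
    have -> : i = (k + (i + b - k - b))%N.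
      by rewrite subnAC addnK subnKC.
    exact: dhomogM.
  rewrite z0 ?mulr0 ?dhomog0 //.
  by rewrite ltn_subLR // ltn_add2r.
have Iu : I (x - f * z).
  apply: injg => //.
  have -> : g * (x - f * z) = i1 + f * i3.
    by rewrite mulrBr E1 E3; ring.
  by apply: ID => //; apply: IMl.
by exists (x - f * z), z; split => //; rewrite mulrC subrK.
Qed.


Lemma P2 f g a c e : mult_surj I f a e -> mult_surj I g c (e + a) ->
  mult_surj I (g * f) (a + c) e.
Proof.
move=> sf sg h hh; rewrite addnA in hh.
have [y [hy Iy]] := sg h hh.
have [z [hz Iz]] := sf y hy.
exists z; split => //.
have -> : h - g * f * z = (h - g * y) + g * (y - f * z) by ring.
by apply: ID => //; apply: IMl.
Qed.

Lemma P3 f g a0 e : f \is a0.-homog -> mult_inj I f e -> mult_inj I g (e + a0) ->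
  mult_inj I (g * f) e.
Proof.
move=> hf jf jg z hz Iz; apply: jf => //; apply: jg.
  by rewrite addnC; apply: dhomogM.
by rewrite mulrA.
Qed.

Lemma pow_surj l e : (forall e', (e <= e')%N -> mult_surj I l 1 e') ->
  forall m e', (e <= e')%N -> mult_surj I (l ^+ m) m e'.
Proof.
move=> hs; elim=> [|m IH] e' he.
  move=> h hh; exists h; split; first by rewrite addn0 in hh.
  by rewrite expr0 mul1r subrr; apply: I0.
rewrite exprSr -add1n; apply: P2; first exact: hs.
by apply: IH; rewrite addn1 ltnW // ltnS.
Qed.

Lemma pow_inj l : l \is 1.-homog -> forall m e,
  (forall e', (e <= e')%N -> (e' < e + m)%N -> mult_inj I l e') ->
  mult_inj I (l ^+ m) e.
Proof.
move=> hl; elim=> [|m IH] e hi.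
  by move=> z hz; rewrite expr0 mul1r.
rewrite exprSr; apply: (P3 hl).
  by apply: hi => //; rewrite addnS ltnS leq_addr.
apply: IH => e' h1 h2; apply: hi.
  lia.
lia.
Qed.

End Ideal.

Lemma decomp_X d (h : R) : h \is d.+1.-homog ->
  exists hs : 'I_n -> R, (forall t, hs t \is d.-homog) /\ h = \sum_t 'X_t * hs t.
Proof.
move=> hh; rewrite {1}[h]mpolyE big_seq.
pose DP (p : R) := exists hs : 'I_n -> R,
  (forall t, hs t \is d.-homog) /\ p = \sum_t 'X_t * hs t.
apply: (@big_ind _ DP).
- by exists (fun=> 0); split => [t|]; [apply: dhomog0 | rewrite big1 // => t _; rewrite mulr0].
- move=> p q [hp [Hp ->]] [hq [Hq ->]]; exists (fun t => hp t + hq t); split.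
    by move=> t; apply: rpredD.
  by rewrite -big_split; apply: eq_bigr => t _; rewrite mulrDr.
move=> m hm; have md : mdeg m = d.+1.
  exact: (dhomog_mf hh hm).
case: (pickP (fun t : 'I_n => (0 < m t)%N)) => [t ht | none]; last first.
  exfalso; move: md; rewrite mdegE big1 // => t _.
  by move: (none t) => /= /negbT; rewrite lt0n negbK => /eqP.
have Em : m = (U_(t) + (m - U_(t)))%MM.
  apply/mnmP => j; rewrite mnmDE mnmBE mnm1E.
  by case: eqP => [<-|_]; rewrite ?subnKC // sub0n.
exists (fun t' => if t' == t then h@_m *: 'X_[m - U_(t)] else 0); split.
  move=> t'; case: ifP => _; last exact: dhomog0.
  apply: dhomogZ; rewrite dhomogX; apply/eqP.
  by move: md; rewrite {1}Em mdegD mdeg1 add1n => -[].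
rewrite (bigD1 t) //= eqxx big1 ?addr0; last by move=> t' /negbTE ->; rewrite mulr0.
by rewrite -scalerAr; congr (_ *: _); rewrite [in LHS]Em mpolyXD.
Qed.

Lemma homogXU (t : 'I_n) : ('X_t : R) \is 1.-homog.
Proof. by apply/dhomogP => m /mem_msuppXP <-; exact: mdeg1. Qed.

Lemma P1 (I : R -> Prop) (HI : homog_ideal I) l e : l \is 1.-homog ->
  mult_surj I l 1 e -> mult_surj I l 1 e.+1.
Proof.
move=> hl hs h hh; rewrite addn1 in hh.
have [hs' [Hhs E]] := decomp_X hh.
rewrite E; apply: (@big_ind _ (fun p => exists g, g \is e.+1.-homog /\ I (p - l * g))).
- by exists 0; split; [apply: dhomog0 | rewrite mulr0 subr0; apply: I0].
- move=> p q [g1 [h1 I1]] [g2 [h2 I2]]; exists (g1 + g2); split; first exact: rpredD.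
  have -> : p + q - l * (g1 + g2) = (p - l * g1) + (q - l * g2) by ring.
  exact: ID.
move=> t _; have [y [hy Iy]] : exists y, y \is e.-homog /\ I (hs' t - l * y).
  by apply: hs; rewrite addn1.
exists ('X_t * y); split.
  by rewrite -add1n; apply: dhomogM => //; apply: homogXU.
have -> : 'X_t * hs' t - l * ('X_t * y) = 'X_t * (hs' t - l * y) by ring.
exact: IMl.
Qed.

Lemma linform_homog (c : 'I_n -> K) : linform c \is 1.-homog.
Proof.
by apply: rpred_sum => t _; apply: dhomogZ; apply: homogXU.
Qed.

End Basic.

Section Lin.
Variables (K : fieldType) (n : nat).
Local Notation R := {mpoly K[n]}.
Variable (I : R -> Prop) (HI : homog_ideal I).

Definition lc (x : nat -> K) (W : seq R) : R := \sum_(b < size W) x b *: W`_b.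

Lemma lc_rcons x W s : lc x (rcons W s) = lc x W + x (size W) *: s.
Proof.
rewrite /lc size_rcons big_ord_recr /= nth_rcons ltnn eqxx; congr (_ + _).
by apply: eq_bigr => b _; rewrite nth_rcons ltn_ord.
Qed.

Lemma lc_ext x y W : (forall b, (b < size W)%N -> x b = y b) -> lc x W = lc y W.
Proof. by move=> h; apply: eq_bigr => b _; rewrite h. Qed.

Lemma lcD x y W : lc (fun b => x b + y b) W = lc x W + lc y W.
Proof. by rewrite /lc -big_split; apply: eq_bigr => b _; rewrite scalerDl. Qed.

Lemma lcZ c x W : lc (fun b => c * x b) W = c *: lc x W.
Proof. by rewrite /lc scaler_sumr; apply: eq_bigr => b _; rewrite scalerA. Qed.

Lemma lc0 W : lc (fun=> 0) W = 0.
Proof. by rewrite /lc big1 // => b _; rewrite scale0r. Qed.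

Definition indep (W : seq R) :=
  forall x, I (lc x W) -> forall b, (b < size W)%N -> x b = 0.

Lemma G d (S : seq R) : (forall p, p \in S -> p \is d.-homog) ->
  exists W, [/\ (forall b, (b < size W)%N -> W`_b \is d.-homog), indep W &
     (forall p, p \in S -> exists x, I (p - lc x W))].
Proof.
elim: S => [_|s S IH hS].
  by exists [::]; split => // x _ b.
have hS' : forall p, p \in S -> p \is d.-homog by move=> p hp; apply: hS; rewrite inE hp orbT.
have [W [hW iW sW]] := IH hS'.
case: (classic (exists x, I (s - lc x W))) => [ex|nex].
  exists W; split => // p; rewrite inE => /orP[/eqP ->|]; [exact: ex | exact: sW].
exists (rcons W s); split.
- move=> b; rewrite size_rcons ltnS nth_rcons leq_eqVlt => /orP[/eqP ->|hb].
    by rewrite ltnn eqxx; apply: hS; rewrite inE eqxx.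
  by rewrite hb; apply: hW.
- move=> x; rewrite lc_rcons => Ix.
  have xs0 : x (size W) = 0.
    apply/eqP; apply: contraT => nz; exfalso; apply: nex; exists (fun b => - (x (size W))^-1 * x b).
    have -> : s - lc (fun b => - (x (size W))^-1 * x b) W =
              (x (size W))^-1 *: (lc x W + x (size W) *: s).
      by rewrite lcZ scalerDr scalerA mulVf // scale1r scaleNr opprK addrC.
    exact: (IZ HI).
  rewrite xs0 scale0r addr0 in Ix.
  move=> b; rewrite size_rcons ltnS leq_eqVlt => /orP[/eqP ->//|hb].
  exact: iW Ix b hb.
- move=> p; rewrite inE => /orP[/eqP ->|hp].
    exists (fun b => if b == size W then 1 else 0).
    rewrite lc_rcons eqxx scale1r (lc_ext (y := fun=> 0)) ?lc0 ?add0r ?subrr; first exact: (I0 HI).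
    by move=> b hb; rewrite (ltn_eqF hb).
  have [x Ix] := sW p hp; exists (fun b => if (b < size W)%N then x b else 0).
  rewrite lc_rcons ltnn scale0r addr0 (lc_ext (y := x)) //.
  by move=> b ->.
Qed.


Lemma hexp t (q : R) : q \is t.-homog ->
  q = \sum_(m : 'X_{1..n < t.+1} | mdeg m == t) q@_m *: 'X_[m].
Proof.
move=> hq; rewrite -{1}(pihomog_dE hq) (@pihomogwE _ _ mdeg t t.+1 q) //.
rewrite msizeE; apply/bigmax_leqP_seq => m hm _.
by rewrite ltnS (dhomog_mf hq hm).
Qed.

Lemma basis_ex d : exists W, [/\ (forall b, (b < size W)%N -> W`_b \is d.-homog),
   indep W & (forall p, p \is d.-homog -> exists x, I (p - lc x W))].
Proof.
pose S := [seq ('X_[bmnm m] : R) | m <- enum [pred m : 'X_{1..n < d.+1} | mdeg m == d]].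
have hS : forall p, p \in S -> p \is d.-homog.
  move=> p /mapP [m]; rewrite mem_enum /= => /eqP hm ->.
  by rewrite dhomogX; apply/eqP.
have [W [hW iW sW]] := G hS; exists W; split => // p hp.
rewrite (hexp hp).
apply: (@big_ind _ (fun p => exists x, I (p - lc x W))).
- by exists (fun=> 0); rewrite lc0 subrr; apply: (I0 HI).
- move=> p1 p2 [x1 I1] [x2 I2]; exists (fun b => x1 b + x2 b); rewrite lcD.
  have -> : p1 + p2 - (lc x1 W + lc x2 W) = (p1 - lc x1 W) + (p2 - lc x2 W) by ring.
  exact: (ID HI).
move=> m hm; have [x Ix] : exists x, I ('X_[m] - lc x W).
  by apply: sW; apply: map_f; rewrite mem_enum.
exists (fun b => p@_m * x b); rewrite lcZ -scalerBr; exact: (IZ HI).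
Qed.

Definition cf t (cm : 'X_{1..n} -> nat -> K) (q : R) (a : nat) : K :=
  \sum_(m : 'X_{1..n < t.+1} | mdeg m == t) q@_m * cm m a.

Lemma cf_sum t cm s (x : nat -> K) (p : nat -> R) a :
  cf t cm (\sum_(bb < s) x bb *: p bb) a = \sum_(bb < s) x bb * cf t cm (p bb) a.
Proof.
rewrite /cf; under eq_bigr => m _ do rewrite raddf_sum mulr_suml.
rewrite exchange_big /=; apply: eq_bigr => bb _.
rewrite mulr_sumr; apply: eq_bigr => m _.
by rewrite mcoeffZ mulrA.
Qed.

Lemma cf_span t cm Y (q : R) :
  (forall m, mdeg m = t -> I ('X_[m] - lc (cm m) Y)) -> q \is t.-homog ->
  I (q - lc (cf t cm q) Y).
Proof.
move=> hcm hq.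
have -> : lc (cf t cm q) Y =
    \sum_(m : 'X_{1..n < t.+1} | mdeg m == t) q@_m *: lc (cm m) Y.
  rewrite /lc /cf; under eq_bigr => a _ do rewrite scaler_suml.
  rewrite exchange_big /=; apply: eq_bigr => m _.
  by rewrite scaler_sumr; apply: eq_bigr => a _; rewrite scalerA.
rewrite {1}(hexp hq) -sumrB; apply: (Isum HI) => m /eqP hm.
by rewrite -scalerBr; apply: (IZ HI); apply: hcm.
Qed.

Lemma cf_zero t cm Y (q : R) :
  (forall m, mdeg m = t -> I ('X_[m] - lc (cm m) Y)) -> indep Y ->
  q \is t.-homog -> I q -> forall a, (a < size Y)%N -> cf t cm q a = 0.
Proof.
move=> hcm iY hq Iq; apply: iY.
have -> : lc (cf t cm q) Y = q - (q - lc (cf t cm q) Y) by ring.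
by apply: (IB HI) => //; apply: cf_span.
Qed.


Section Poly.
Variables (b t : nat) (cm : 'X_{1..n} -> nat -> K) (W : seq R) (r : nat).
Variable (B : 'M[K]_(r, size W)).
Local Notation S := {mpoly K[n + n]}.
Local Notation RS := {mpoly S[n]}.

Definition Lam : RS := \sum_(t0 < n) ('X_(rshift n t0) : S) *: ('X_t0 : RS).
Definition liftP (w : R) : RS := map_mpoly (@mpolyC (n + n) K) w.
Definition cfS (p : RS) (a : nat) : S :=
  \sum_(m : 'X_{1..n < t.+1} | mdeg m == t) p@_m * (cm m a)%:MP.
Definition Cmat (c : 'I_n -> K) : 'M[K]_(size W, r) :=
  \matrix_(bb, a) cf t cm ((linform c) ^+ b * W`_bb) a.
Definition ES : 'M[S]_(size W, r) :=
  \matrix_(bb, a) cfS (Lam ^+ b * liftP W`_bb) a.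
Definition Tpol : S := \det (ES *m map_mx (@mpolyC (n + n) K) B).

Lemma Tpol_eval v : Tpol.@[v] = \det (Cmat (fun t0 => v (rshift n t0)) *m B).
Proof.
have e1 : map_mpoly (meval v) Lam = linform (fun t0 => v (rshift n t0)).
  rewrite /Lam raddf_sum; apply: eq_bigr => t0 _.
  by rewrite /= map_mpolyZ map_mpolyX; congr (_ *: _); apply: mevalXU.
have e2 w : map_mpoly (meval v) (liftP w) = w.
  by apply/mpolyP => m; rewrite !mcoeff_map_mpoly; exact: mevalC.
have e4 p a : meval v (cfS p a) = cf t cm (map_mpoly (meval v) p) a.
  rewrite /cfS /cf rmorph_sum; apply: eq_bigr => m _.
  by rewrite rmorphM /= mevalC mcoeff_map_mpoly.
rewrite /Tpol -det_map_mx map_mxM.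
have -> : map_mx (meval v) (map_mx (@mpolyC (n + n) K) B) = B.
  by apply/matrixP => i j; rewrite !mxE mevalC.
congr (\det (_ *m _)); apply/matrixP => i j.
by rewrite !mxE /= e4 rmorphM rmorphXn /= e1 e2.
Qed.

End Poly.



Lemma Cmat_ext b t cm W r (c1 c2 : 'I_n -> K) : c1 =1 c2 ->
  Cmat b t cm W r c1 = Cmat b t cm W r c2.
Proof.
move=> h; rewrite /Cmat.
by have -> : linform c1 = linform c2 by apply: eq_bigr => t0 _; rewrite h.
Qed.

Lemma Cmat_row b t cm W r c (u : 'rV[K]_(size W)) (x : nat -> K) a :
  (forall j : 'I_(size W), x j = u 0 j) ->
  (u *m Cmat b t cm W r c) 0 a = cf t cm ((linform c) ^+ b * lc x W) a.
Proof.
move=> hx; rewrite !mxE /lc mulr_sumr.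
under [in RHS]eq_bigr => j _ do rewrite -scalerAr.
rewrite (cf_sum t cm (size W) x (fun bb => linform c ^+ b * W`_bb)).
by apply: eq_bigr => j _; rewrite mxE hx.
Qed.

Lemma lc_homog d x W : (forall b, (b < size W)%N -> W`_b \is d.-homog) ->
  lc x W \is d.-homog.
Proof. by move=> hW; apply: rpred_sum => j _; apply: dhomogZ; apply: hW. Qed.

Lemma transfer (b i : nat) : exists T : {mpoly K[n + n]}, T != 0 /\
  forall v, T.@[v] != 0 ->
    mult_inj I ((linform (fun t0 => v (lshift n t0))) ^+ b) i ->
    mult_inj I ((linform (fun t0 => v (rshift n t0))) ^+ b) i.
Proof.
case: (classic (exists c0 : 'I_n -> K, mult_inj I ((linform c0) ^+ b) i)) =>
  [[c0 inj0]|none]; last first.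
  exists 1; split; first exact: oner_neq0.
  by move=> v _ h; exfalso; apply: none; exists (fun t0 => v (lshift n t0)).
pose t := (b + i)%N.
have [W [hW iW sW]] := basis_ex i.
have [Y [hY iY sY]] := basis_ex t.
have H : forall m : 'X_{1..n}, exists x, (mdeg m = t -> I ('X_[m] - lc x Y)).
  move=> m; case: (eqVneq (mdeg m) t) => [e|ne].
    have hm : ('X_[m] : R) \is t.-homog by rewrite dhomogX; apply/eqP.
    by have [x Ix] := sY _ hm; exists x.
  by exists (fun=> 0) => e; rewrite e eqxx in ne.
pose cm m := proj1_sig (constructive_indefinite_description _ (H m)).
have hcm : forall m, mdeg m = t -> I ('X_[m] - lc (cm m) Y).
  by move=> m; exact: (proj2_sig (constructive_indefinite_description _ (H m))).
have hq : forall c x, (linform c) ^+ b * lc x W \is t.-homog.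
  move=> c x; have -> : t = (1 * b + i)%N by rewrite mul1n.
  apply: dhomogM; last exact: lc_homog.
  by apply: dhomogMn; apply: linform_homog.
pose rv2f (u : 'rV[K]_(size W)) (bb : nat) := \sum_(j < size W | val j == bb) u 0 j.
have rv2fE : forall u (j : 'I_(size W)), rv2f u j = u 0 j.
  move=> u j; rewrite /rv2f (big_pred1 j) // => j'; exact: val_eqE.
have rf : row_free (Cmat b t cm W (size Y) c0).
  apply: inj_row_free => u hu.
  have cq0 : forall a, (a < size Y)%N ->
      cf t cm ((linform c0) ^+ b * lc (rv2f u) W) a = 0.
    move=> a ha; rewrite -(@Cmat_row b t cm W (size Y) c0 u (rv2f u) (Ordinal ha) (rv2fE u)).
    by rewrite hu mxE.
  have Iq : I ((linform c0) ^+ b * lc (rv2f u) W).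
    have := cf_span hcm (hq c0 (rv2f u)).
    by rewrite (@lc_ext _ (fun=> 0) Y cq0) lc0 subr0.
  have := iW _ (inj0 _ (lc_homog _ hW) Iq) => x0.
  apply/matrixP => i0 j; rewrite ord1 mxE -rv2fE; exact: x0.
have [B hB] := row_freeP rf.
exists (Tpol b t cm B); split.
  apply/eqP => h0.
  pose v0 (j : 'I_(n + n)) := match split j with inl _ => 0 | inr t0 => c0 t0 end.
  have := @Tpol_eval b t cm W (size Y) B v0; rewrite h0 meval0.
  rewrite (@Cmat_ext b t cm W (size Y) _ c0); last by move=> t0; rewrite /v0 (unsplitK (inr t0)).
  by rewrite hB det1 => /eqP; rewrite eq_sym oner_eq0.
move=> v Tv _ g hg Ig.
set L := linform (fun t0 => v (rshift n t0)) in Ig *.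
have [x Ix] := sW g hg.
have Iq : I (L ^+ b * lc x W).
  have -> : L ^+ b * lc x W = L ^+ b * g - L ^+ b * (g - lc x W) by ring.
  by apply: (IB HI) => //; apply: (IMl HI).
have hqL : L ^+ b * lc x W \is t.-homog by apply: hq.
have cq0 := cf_zero hcm iY hqL Iq.
pose u := \row_(j < size W) x j.
have hu : u *m Cmat b t cm W (size Y) (fun t0 => v (rshift n t0)) = 0.
  apply/matrixP => i0 j; rewrite ord1 (@Cmat_row b t cm W (size Y) _ u x j); last by move=> j'; rewrite mxE.
  by rewrite mxE cq0.
have un : (Cmat b t cm W (size Y) (fun t0 => v (rshift n t0)) *m B) \in unitmx.
  by rewrite unitmxE unitfE -Tpol_eval.
have rfu : row_free (Cmat b t cm W (size Y) (fun t0 => v (rshift n t0)) *m B).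
  by rewrite row_free_unit.
have u0 : u = 0.
  by apply/eqP; rewrite -(mulmx_free_eq0 _ rfu) mulmxA hu mul0mx.
have x0 : forall j, (j < size W)%N -> x j = 0.
  move=> j hj; have := congr1 (fun M : 'rV_(size W) => M 0 (Ordinal hj)) u0.
  by rewrite !mxE.
by move: Ix; rewrite (@lc_ext x (fun=> 0) W x0) lc0 subr0.
Qed.

End Lin.

Section Final.
Variables (K : fieldType) (n : nat).
Local Notation R := {mpoly K[n]}.
Local Notation S := {mpoly K[n + n]}.

Definition lqL : n.-tuple S := [tuple ('X_(lshift n t0) : S) | t0 < n].

Lemma lift_eval (Q : R) v : (Q \mPo lqL).@[v] = Q.@[fun t0 => v (lshift n t0)].
Proof.
rewrite comp_mpoly_meval; apply: meval_eq => t0.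
by rewrite tnth_mktuple mevalXU.
Qed.

Definition lqB : (n + n).-tuple R :=
  [tuple (match split j with inl t0 => ('X_t0 : R) | inr _ => 0 end) | j < n + n].

Lemma lift_back (Q : R) : (Q \mPo lqL) \mPo lqB = Q.
Proof.
rewrite [RHS]mpolyE [Q \mPo lqL]comp_mpolyEX raddf_sum /=; apply: eq_bigr => m _.
rewrite comp_mpolyZ comp_mpolyX rmorph_prod /= mpolyXE_id; congr (_ *: _).
apply: eq_bigr => t0 _; rewrite rmorphXn /= tnth_mktuple comp_mpolyXU.
by rewrite -tnth_nth tnth_mktuple (unsplitK (inl t0)).
Qed.

Lemma lift_neq0 (Q : R) : Q != 0 -> Q \mPo lqL != 0.
Proof.
apply: contraNneq => h; rewrite -(lift_back Q) h.
by rewrite comp_mpoly0.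
Qed.

Lemma surj_up (I : R -> Prop) (HI : homog_ideal I) l e : l \is 1.-homog ->
  mult_surj I l 1 e -> forall e', (e <= e')%N -> mult_surj I l 1 e'.
Proof.
move=> hl hs; elim=> [|e' IH] he.
  by case: e hs he.
case: (leqP e e') => h; first by apply: P1 => //; apply: IH.
have E : e = e'.+1 by apply/eqP; rewrite eqn_leq he h.
by rewrite -E.
Qed.


Lemma partb (I : R -> Prop) (HI : homog_ideal I) f g k b :
  f \is k.-homog -> g \is b.-homog ->
  max_rank (ideal_add I g) f k -> max_rank I g b ->
  max_rank (ideal_add I f) g b.
Proof.
move=> hf hg HD HA i; case: (HA i) => [inj|surj]; last by right; exact: S2.
case: (leqP k (i + b)) => hk.
  case: (HD (i + b - k)%N) => [injD|surjD]; last by right; exact: (S3 HI hf hg hk surjD).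
  by left; apply: (core HI hf hg inj) => _.
by left; apply: (core HI hf hg inj) => h; exfalso; move: h; rewrite leqNgt hk.
Qed.

Lemma parta (I : R -> Prop) (HI : homog_ideal I) l g k b :
  l \is 1.-homog -> max_rank I l 1 -> (k <= b)%N -> g \is b.-homog ->
  max_rank I (l ^+ k) k -> max_rank (ideal_add I g) (l ^+ k) k ->
  (forall i, mult_inj I (l ^+ b) i -> mult_inj I g i) ->
  max_rank (ideal_add I (l ^+ k)) g b.
Proof.
move=> hl mrl hkb hg HfA HfD Linj i.
have hk : (k <= i + b)%N by apply: leq_trans hkb (leq_addl _ _).
have hf : l ^+ k \is k.-homog by rewrite -{2}(mul1n k); apply: dhomogMn.
case: (classic (mult_surj I (l ^+ k) k (i + b - k)%N)) => [s|ns].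
  by right; exact: (S1 g hk s).
have injA : mult_inj I (l ^+ k) (i + b - k).
  by case: (HfA (i + b - k)%N) => // /ns.
case: (HfD (i + b - k)%N) => [injD|surjD]; last by right; exact: (S3 HI hf hg hk surjD).
left; apply: (core HI hf hg) => [|_]; last exact: injD.
apply: Linj.
have -> : l ^+ b = l ^+ k * l ^+ (b - k)%N by rewrite -exprD subnKC.
apply: (P3 (a0 := (b - k)%N)) => //.
- by rewrite -{2}(mul1n (b - k)%N); apply: dhomogMn.
- apply: pow_inj => // e' h1 h2.
  case: (mrl e') => // s; exfalso; apply: ns.
  apply: (pow_surj HI (e := e')) => //.
    by move=> e'' he''; apply: (surj_up HI hl s).
  lia.
- by rewrite addnBA.
Qed.

End Final.

Theorem proposition3p1 (K : fieldType) (Kinf : infinite_field K)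
  (n : nat) (I : {mpoly K[n]} -> Prop)
  (HI : homog_ideal I) (HA : artinian I)
  (b k : nat) (hb : (0 < b)%N) (hk : (0 < k)%N) :
  exists P : {mpoly K[n + n]}, P != 0 /\
    forall v : 'I_(n + n) -> K, P.@[v] != 0 ->
      let l := linform (fun i => v (lshift n i)) in
      let L := linform (fun i => v (rshift n i)) in
      (* (a) *)
      (WLP I -> (k <= b)%N ->
         max_rank I (l ^+ k) k ->
         max_rank (ideal_add I (L ^+ b)) (l ^+ k) k ->
         max_rank (ideal_add I (l ^+ k)) (L ^+ b) b)
      /\
      (* (b) *)
      (max_rank (ideal_add I (L ^+ b)) (l ^+ k) k ->
         max_rank I (L ^+ b) b ->
         max_rank (ideal_add I (l ^+ k)) (L ^+ b) b).
Proof.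
have [D HD] := HA.
have HT := transfer HI b.
pose Tf i := proj1_sig (constructive_indefinite_description _ (HT i)).
have hTf : forall i, Tf i != 0 /\ forall v, (Tf i).@[v] != 0 ->
    mult_inj I ((linform (fun t0 => v (lshift n t0))) ^+ b) i ->
    mult_inj I ((linform (fun t0 => v (rshift n t0))) ^+ b) i.
  by move=> i; exact: (proj2_sig (constructive_indefinite_description _ (HT i))).
pose Tp := \prod_(i < D) Tf i.
have Tpnz : Tp != 0 by apply/prodf_neq0 => i _; case: (hTf i).
have homk : forall c : 'I_n -> K, (linform c) ^+ k \is k.-homog.
  by move=> c; rewrite -{2}(mul1n k); apply: dhomogMn; apply: linform_homog.
have homb : forall c : 'I_n -> K, (linform c) ^+ b \is b.-homog.
  by move=> c; rewrite -{2}(mul1n b); apply: dhomogMn; apply: linform_homog.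
have partB : forall v : 'I_(n + n) -> K,
   max_rank (ideal_add I (linform (fun i => v (rshift n i)) ^+ b))
     (linform (fun i => v (lshift n i)) ^+ k) k ->
   max_rank I (linform (fun i => v (rshift n i)) ^+ b) b ->
   max_rank (ideal_add I (linform (fun i => v (lshift n i)) ^+ k))
     (linform (fun i => v (rshift n i)) ^+ b) b.
  by move=> v; apply: partb.
case: (classic (WLP I)) => [[Q [Qnz HQ]]|nW]; last first.
  exists 1; split; first exact: oner_neq0.
  move=> v _ l L; split; first by move=> hW; exfalso; apply: nW.
  exact: partB.
exists ((Q \mPo lqL K n) * Tp); split; first by rewrite mulf_neq0 // lift_neq0.
move=> v; rewrite mevalM mulf_eq0 negb_or => /andP [Qv Tv] l L.
split; last exact: partB.
move=> _ hkb HfA HfD.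
have Tiv : forall i, (i < D)%N -> (Tf i).@[v] != 0.
  move: Tv; rewrite /Tp rmorph_prod /= => /prodf_neq0 h i hi.
  exact: (h (Ordinal hi)).
rewrite lift_eval in Qv.
have mrl := HQ _ Qv.
apply: (parta HI (linform_homog _) mrl hkb (homb _) HfA HfD).
move=> i hi; case: (ltnP i D) => hiD.
  exact: (proj2 (hTf i) v (Tiv i hiD) hi).
by move=> g hg _; apply: (HD i) => //.
Qed.
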